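(* Let $\alpha^\star>0$ and let $\theta:(0,\infty)\to\mathbb{R}$ be a function. For $\Lambda\ge 0$, $m>0$ and $\Delta t>0$ define, for $x>0$, $$A(x)=\cos(\theta(x))-\frac{\Delta t^2(\Lambda/m)}{2}\,\frac{\sin(\theta(x))}{x}.$$ Suppose that $0<\theta(x)<2\arctan(2x/\alpha^\star)$ for all $x>0$. Then for all $\Lambda\ge 0$, $m>0$ and $\Delta t>0$ satisfying $\Delta t^2\Lambda/m<\alpha^\star$, we have $|A(x)|<1$ for all $x>0$.
   Context: $\theta$ is the angle function parametrizing an approximate free ring-polymer update; $\Lambda$ is the curvature of a harmonic external potential $V(q)=(\Lambda/2)q^2$, $m$ a mass and $\Delta t$ a time-step. *)

(* Defs.v *)
From Stdlib Require Import Reals Lra.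
Open Scope R_scope.

Definition A_fun (theta : R -> R) (Lambda m dt x : R) : R :=
  cos (theta x) - (dt ^ 2 * (Lambda / m)) / 2 * (sin (theta x) / x).

(* Main.v *)
Require Import Defs.
From Stdlib Require Import Reals Lra.
Open Scope R_scope.

Theorem theorem2 (alpha_star : R) (theta : R -> R) :
  0 < alpha_star ->
  (forall x : R, 0 < x -> 0 < theta x /\ theta x < 2 * atan (2 * x / alpha_star)) ->
  forall Lambda m dt : R,
    0 <= Lambda -> 0 < m -> 0 < dt ->
    dt ^ 2 * Lambda / m < alpha_star ->
    forall x : R, 0 < x -> Rabs (A_fun theta Lambda m dt x) < 1.
Proof.
  intros Ha Hth L m dt HL Hm Hdt Hc x Hx.
  destruct (Hth x Hx) as [H1 H2].
  set (u := theta x / 2).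
  assert (Ht : theta x = 2 * u) by (unfold u; field).
  set (y := 2 * x / alpha_star).
  assert (Hy : 0 < y) by (unfold y; apply Rdiv_lt_0_compat; lra).
  pose proof (atan_bound y) as Hb.
  assert (Hu0 : 0 < u) by (unfold u; lra).
  assert (Hu1 : u < atan y) by (unfold u; fold y in H2; lra).
  assert (HPI : 0 < PI) by exact PI_RGT_0.
  assert (Hs : 0 < sin u) by (apply sin_gt_0; lra).
  assert (Hco : 0 < cos u) by (apply cos_gt_0; lra).
  assert (Htan : tan u < y).
  { destruct (Rlt_or_le (tan u) y) as [h|h]; auto.
    destruct (Rle_lt_or_eq_dec _ _ h) as [h'|h'].
    - apply atan_increasing in h'. rewrite atan_tan in h'; lra.
    - assert (E : atan (tan u) = u) by (apply atan_tan; lra).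
      rewrite <- h' in E. lra. }
  assert (Hsin : sin u < y * cos u).
  { unfold tan in Htan. apply (Rmult_lt_compat_r (cos u)) in Htan; auto.
    field_simplify in Htan; lra. }
  
  assert (Hc0 : 0 <= dt ^ 2 * (L / m)).
  { apply Rmult_le_pos. apply pow_le; lra. unfold Rdiv; apply Rmult_le_pos; [lra|left; apply Rinv_0_lt_compat; lra]. }
  assert (Hc1 : dt ^ 2 * (L / m) < alpha_star).
  { unfold Rdiv in *. rewrite <- Rmult_assoc. exact Hc. }
  set (k := dt ^ 2 * (L / m)) in *.
  unfold A_fun. rewrite Ht, cos_2a_cos, sin_2a.
  assert (Hks : k * sin u <= alpha_star * sin u) by nra.
  assert (Hay : alpha_star * y = 2 * x) by (unfold y; field; lra).
  assert (Hk2 : k / 2 * (2 * sin u * cos u / x) = (k * sin u) * cos u / x) by (field; lra).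
  fold k. rewrite Hk2.
  assert (Hq : 0 <= k * sin u * cos u / x).
  { unfold Rdiv; apply Rmult_le_pos; [|left; apply Rinv_0_lt_compat; lra]. apply Rmult_le_pos; [|lra]. nra. }
  assert (Hlt : k * sin u * cos u / x < 2 * cos u * cos u).
  { apply (Rmult_lt_reg_r x); auto. unfold Rdiv. rewrite Rmult_assoc, Rinv_l by lra.
    rewrite Rmult_1_r.
    assert (Hm1 : k * sin u < 2 * x * cos u).
    { assert (alpha_star * sin u < alpha_star * (y * cos u)) by (apply Rmult_lt_compat_l; lra).
      nra. }
    assert (Hm2 : k * sin u * cos u < 2 * x * cos u * cos u) by (apply Rmult_lt_compat_r; lra).
    lra. }
  assert (Hcos1 : cos u * cos u <= 1).
  { pose proof (sin2_cos2 u). unfold Rsqr in *. nra. }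
  assert (Hstrict : 2 * cos u * cos u - 1 < 1 \/ 0 < k * sin u * cos u / x).
  { destruct (Rle_lt_or_eq_dec _ _ Hcos1) as [h|h]; [left; lra|].
    pose proof (sin2_cos2 u). unfold Rsqr in *. nra. }
  apply Rabs_def1; destruct Hstrict; lra.
Qed.
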